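(* Let $\varepsilon,\delta>0$ be constants and let $u_\pm$ be real numbers with $u_->u_+$ and \[ 0<\frac{\delta(u_--u_+)}{2\varepsilon^2}\le\frac14 . \] Let $\tilde u$ be a monotone viscous-dispersive shock of the KdV--Burgers equation $u_t+(u^2/2)_x=\varepsilon u_{xx}-\delta u_{xxx}$ connecting $u_-$ and $u_+$, normalized so that $\tilde u(0)=\frac{u_-+u_+}{2}$. Set $\underline\lambda=\sqrt2-1$ and $\bar\lambda=1$. Then \[ \frac{u_--u_+}{2}e^{-\frac{\bar\lambda(u_--u_+)|x|}{\varepsilon}}\le u_--\tilde u(x)\le\frac{u_--u_+}{2}e^{-\frac{\underline\lambda(u_--u_+)|x|}{2\varepsilon}}\qquad\forall x\le0, \] \[ \frac{u_--u_+}{2}e^{-\frac{\bar\lambda(u_--u_+)|x|}{\varepsilon}}\le \tilde u(x)-u_+\le\frac{u_--u_+}{2}e^{-\frac{\underline\lambda(u_--u_+)|x|}{2\varepsilon}}\qquad\forall x\ge0, \] \[ \frac{\underline\lambda(u_--u_+)^2}{4\varepsilon}e^{-\frac{\bar\lambda(u_--u_+)|x|}{\varepsilon}}\le-\tilde u'(x)\le\frac{\bar\lambda(u_--u_+)^2}{2\varepsilon}e^{-\frac{\underline\lambda(u_--u_+)|x|}{2\varepsilon}}\qquad\forall x\in\mathbb R . \]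
   Context: A viscous-dispersive shock connecting $u_-$ and $u_+$ (with $u_->u_+$) is a smooth function $\tilde u:\mathbb R\to\mathbb R$ such that $\tilde u(x-\sigma t)$ solves $u_t+(u^2/2)_x=\varepsilon u_{xx}-\delta u_{xxx}$, i.e. $-\sigma\tilde u'+(\tilde u^2/2)'=\varepsilon\tilde u''-\delta\tilde u'''$, with $\tilde u(\xi)\to u_\pm$ and $\tilde u'(\xi)\to0$ as $\xi\to\pm\infty$, where $\sigma=\frac{u_-+u_+}{2}$. *)

(* Defs.v *)
From Stdlib Require Import Reals.
From Coquelicot Require Import Coquelicot.
Open Scope R_scope.

Definition smooth (f : R -> R) : Prop :=
  forall (n : nat) (x : R), ex_derive (Derive_n f n) x.

Definition monotone (f : R -> R) : Prop :=
  (forall x y, x <= y -> f x <= f y) \/ (forall x y, x <= y -> f y <= f x).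

(* Viscous-dispersive shock of KdV-Burgers u_t + (u^2/2)_x = eps u_xx - delta u_xxx
   connecting um (= u_-) and up (= u_+), with speed sigma = (um+up)/2. *)
Definition vd_shock (eps delta um up : R) (u : R -> R) : Prop :=
  smooth u /\
  (forall xi : R,
     - ((um + up) / 2) * Derive_n u 1 xi + u xi * Derive_n u 1 xi
     = eps * Derive_n u 2 xi - delta * Derive_n u 3 xi) /\
  is_lim u m_infty um /\ is_lim u p_infty up /\
  is_lim (Derive_n u 1) m_infty 0 /\ is_lim (Derive_n u 1) p_infty 0.

(* Main.v *)
Require Import Defs.
From Stdlib Require Import Reals Lra Psatz.
From Coquelicot Require Import Coquelicot.
Open Scope R_scope.


Lemma mvt (f : R -> R) a b : a < b -> (forall x, ex_derive f x) ->
  exists c, a < c < b /\ f b - f a = Derive f c * (b - a).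
Proof.
  intros Hab Hd.
  destruct (MVT_cor2 f (Derive f) a b Hab) as [c [Hc1 Hc2]].
  - intros c _. apply is_derive_Reals. apply Derive_correct. apply Hd.
  - exists c. split; [exact Hc2 | exact Hc1].
Qed.

Lemma mono_le (f df : R -> R) a b : a <= b -> (forall x, is_derive f x (df x)) ->
  (forall x, a <= x <= b -> 0 <= df x) -> f a <= f b.
Proof.
  intros Hab Hd Hs.
  destruct (Req_dec a b) as [->|Hne]; [lra|].
  destruct (MVT_cor2 f df a b) as [c [Hc1 Hc2]]; [lra| |].
  - intros c _. apply is_derive_Reals. apply Hd.
  - assert (0 <= df c) by (apply Hs; lra). nra.
Qed.

Lemma const_of_d0 (f : R -> R) : (forall x, is_derive f x 0) -> forall x, f x = f 0.
Proof.
  intros Hd.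
  assert (K : forall a b, a <= b -> f a <= f b).
  { intros a b Hab. apply (mono_le f (fun _ => 0) a b Hab); [exact Hd | intros; lra]. }
  assert (K2 : forall a b, a <= b -> - f a <= - f b).
  { intros a b Hab. apply (mono_le (fun y => - f y) (fun _ => 0) a b Hab); [|intros; lra].
    intro y. replace 0 with (-0) by ring. apply is_derive_Reals. apply derivable_pt_lim_opp. apply is_derive_Reals. auto. }
  intro x. destruct (Rle_dec x 0).
  - specialize (K x 0 r). specialize (K2 x 0 r). lra.
  - specialize (K 0 x ltac:(lra)). specialize (K2 0 x ltac:(lra)). lra.
Qed.

Lemma lim_p (f : R -> R) (l : R) : is_lim f p_infty l ->
  forall e, 0 < e -> exists M, forall x, M < x -> Rabs (f x - l) < e.
Proof.
  intros H e He. apply is_lim_spec in H. exact (H (mkposreal e He)).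
Qed.

Lemma lim_m (f : R -> R) (l : R) : is_lim f m_infty l ->
  forall e, 0 < e -> exists M, forall x, x < M -> Rabs (f x - l) < e.
Proof.
  intros H e He. apply is_lim_spec in H. exact (H (mkposreal e He)).
Qed.

Lemma is_lim_mult' (f g : R -> R) x (lf lg : R) : is_lim f x lf -> is_lim g x lg ->
  is_lim (fun y => f y * g y) x (lf * lg).
Proof.
  intros H1 H2. exact (is_lim_mult f g x lf lg H1 H2 I).
Qed.

Lemma deriv_lim_zero (f : R -> R) (l : R) : (forall x, ex_derive f x) ->
  is_lim f p_infty 0 -> is_lim (Derive f) p_infty l -> l = 0.
Proof.
  intros Hd H1 H2.
  destruct (Req_dec l 0) as [|Hl]; auto. exfalso.
  assert (Ha : 0 < Rabs l) by (apply Rabs_pos_lt; auto).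
  destruct (lim_p _ _ H2 (Rabs l / 2)) as [M1 HM1]; [lra|].
  destruct (lim_p _ _ H1 (Rabs l / 4)) as [M2 HM2]; [lra|].
  set (x := Rmax M1 M2 + 1).
  assert (M1 < x) by (unfold x; generalize (Rmax_l M1 M2); lra).
  assert (M2 < x) by (unfold x; generalize (Rmax_r M1 M2); lra).
  destruct (mvt f x (x+1)) as [c [Hc Hc2]]; [lra|auto|].
  replace (x + 1 - x) with 1 in Hc2 by ring.
  specialize (HM1 c ltac:(lra)).
  pose proof (HM2 x ltac:(lra)) as A. pose proof (HM2 (x+1) ltac:(lra)) as B.
  rewrite Rminus_0_r in A, B.
  apply Rabs_def2 in A. apply Rabs_def2 in B. apply Rabs_def2 in HM1.
  destruct (Rlt_dec 0 l).
  - rewrite Rabs_right in *; lra.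
  - rewrite Rabs_left in *; lra.
Qed.

Lemma lim_m_le (f : R -> R) (l : R) x0 : is_lim f m_infty l ->
  (forall y, y <= x0 -> f y <= f x0) -> l <= f x0.
Proof.
  intros H Hm. destruct (Rle_dec l (f x0)) as [|Hn]; auto. exfalso.
  destruct (lim_m _ _ H (l - f x0)) as [M HM]; [lra|].
  set (y := Rmin M x0 - 1).
  assert (y < M) by (unfold y; generalize (Rmin_l M x0); lra).
  assert (y <= x0) by (unfold y; generalize (Rmin_r M x0); lra).
  specialize (HM y ltac:(lra)). specialize (Hm y ltac:(lra)).
  apply Rabs_def2 in HM. lra.
Qed.

Lemma lim_m_ge (f : R -> R) (l : R) x0 : is_lim f m_infty l ->
  (forall y, y <= x0 -> f x0 <= f y) -> f x0 <= l.
Proof.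
  intros H Hm. apply is_lim_opp in H.
  assert (-l <= - f x0); [|lra].
  apply (lim_m_le (fun y => - f y) (-l) x0); auto.
  intros y Hy. specialize (Hm y Hy). lra.
Qed.

Lemma lim_p_le (f : R -> R) (l : R) x0 : is_lim f p_infty l ->
  (forall y, x0 <= y -> f y <= f x0) -> l <= f x0.
Proof.
  intros H Hm. destruct (Rle_dec l (f x0)) as [|Hn]; auto. exfalso.
  destruct (lim_p _ _ H (l - f x0)) as [M HM]; [lra|].
  set (y := Rmax M x0 + 1).
  assert (M < y) by (unfold y; generalize (Rmax_l M x0); lra).
  assert (x0 <= y) by (unfold y; generalize (Rmax_r M x0); lra).
  specialize (HM y ltac:(lra)). specialize (Hm y ltac:(lra)).
  apply Rabs_def2 in HM. lra.
Qed.

Lemma lim_p_ge (f : R -> R) (l : R) x0 : is_lim f p_infty l ->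
  (forall y, x0 <= y -> f x0 <= f y) -> f x0 <= l.
Proof.
  intros H Hm. apply is_lim_opp in H.
  assert (-l <= - f x0); [|lra].
  apply (lim_p_le (fun y => - f y) (-l) x0); auto.
  intros y Hy. specialize (Hm y Hy). lra.
Qed.

Lemma max_arg (F : R -> R) : (forall x, ex_derive F x) ->
  is_lim F m_infty 0 -> is_lim F p_infty 0 ->
  forall y0, 0 < F y0 -> exists M, F y0 <= F M /\ Derive F M = 0.
Proof.
  intros Hd Hm Hp y0 Hy0.
  destruct (lim_m _ _ Hm (F y0)) as [N1 HN1]; auto.
  destruct (lim_p _ _ Hp (F y0)) as [N2 HN2]; auto.
  set (a := Rmin N1 y0 - 1). set (b := Rmax N2 y0 + 1).
  assert (a < N1) by (unfold a; generalize (Rmin_l N1 y0); lra).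
  assert (a < y0) by (unfold a; generalize (Rmin_r N1 y0); lra).
  assert (N2 < b) by (unfold b; generalize (Rmax_l N2 y0); lra).
  assert (y0 < b) by (unfold b; generalize (Rmax_r N2 y0); lra).
  assert (Fa : F a < F y0).
  { specialize (HN1 a ltac:(lra)). rewrite Rminus_0_r in HN1. apply Rabs_def2 in HN1; lra. }
  assert (Fb : F b < F y0).
  { specialize (HN2 b ltac:(lra)). rewrite Rminus_0_r in HN2. apply Rabs_def2 in HN2; lra. }
  destruct (continuity_ab_maj F a b) as [M [HM1 HM2]]; [lra| |].
  - intros c _. apply derivable_continuous_pt. apply ex_derive_Reals_0. auto.
  - assert (FM : F y0 <= F M) by (apply HM1; lra).
    exists M. split; auto.
    assert (a < M) by (destruct (Req_dec a M); [subst; lra | lra]).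
    assert (M < b) by (destruct (Req_dec M b); [subst; lra | lra]).
    rewrite <- (Derive_Reals F M (ex_derive_Reals_0 F M (Hd M))).
    apply (deriv_maximum F a b M); auto.
    intros x Hx1 Hx2. apply HM1. lra.
Qed.

Lemma min_arg (F : R -> R) : (forall x, ex_derive F x) ->
  is_lim F m_infty 0 -> is_lim F p_infty 0 ->
  forall y0, F y0 < 0 -> exists M, F M <= F y0 /\ Derive F M = 0.
Proof.
  intros Hd Hm Hp y0 Hy0.
  destruct (max_arg (fun x => - F x)) with (y0 := y0) as [M [H1 H2]].
  - intro x. destruct (Hd x) as [l Hl]. exists (-l). apply is_derive_Reals. apply derivable_pt_lim_opp. apply is_derive_Reals. auto.
  - replace (Finite 0) with (Rbar_opp 0) by (simpl; f_equal; ring). apply is_lim_opp. auto.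
  - replace (Finite 0) with (Rbar_opp 0) by (simpl; f_equal; ring). apply is_lim_opp. auto.
  - lra.
  - exists M. split; [lra|]. rewrite Derive_opp in H2. lra.
Qed.

Lemma is_lim_scal' (f : R -> R) x (l c : R) : is_lim f x l -> is_lim (fun y => c * f y) x (c * l).
Proof. intro H. apply (is_lim_mult' (fun _ => c) f). apply is_lim_const. auto. Qed.

Lemma F_lim (u d : R -> R) x (L eps c A s : R) : is_lim u x L -> is_lim d x 0 ->
  is_lim (fun y => -(eps * d y) - c * (A - (u y - s)^2)) x (-(eps*0) - c*(A - (L - s)^2)).
Proof.
  intros Hu Hd.
  apply is_lim_minus'.
  - apply (is_lim_ext (fun y => -1 * (eps * d y))); [intro; ring|].
    replace (-(eps*0)) with (-1 * (eps * 0)) by ring.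
    apply is_lim_scal'. apply is_lim_scal'. auto.
  - apply is_lim_scal'. apply is_lim_minus'. apply is_lim_const.
    apply (is_lim_ext (fun y => (u y - s) * (u y - s))); [intro; ring|].
    replace ((L - s)^2) with ((L-s)*(L-s)) by ring.
    assert (H : is_lim (fun y => u y - s) x (L - s)).
    { apply is_lim_minus'; auto. apply is_lim_const. }
    apply is_lim_mult'; auto.
Qed.

Lemma G_lim (u d : R -> R) x (L eps C s : R) : is_lim u x L -> is_lim d x 0 ->
  is_lim (fun y => eps * d y - C - ((u y)^2/2 - s * u y)) x (eps*0 - C - (L^2/2 - s*L)).
Proof.
  intros Hu Hd.
  apply is_lim_minus'.
  - apply is_lim_minus'. apply is_lim_scal'. auto. apply is_lim_const.
  - apply is_lim_minus'.
    + apply (is_lim_ext (fun y => /2 * (u y * u y))); [intro; field|].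
      replace (L^2/2) with (/2 * (L*L)) by field.
      apply is_lim_scal'. apply is_lim_mult'; auto.
    + apply is_lim_scal'. auto.
Qed.

Lemma L_up (g dg : R -> R) k x y : x <= y -> (forall t, is_derive g t (dg t)) ->
  (forall t, x <= t <= y -> k * g t <= dg t) -> g x * exp (k * (y - x)) <= g y.
Proof.
  intros Hxy Hd Hs.
  assert (H : g x * exp (- k * x) <= g y * exp (- k * y)).
  { apply (mono_le (fun t => g t * exp (- k * t)) (fun t => (dg t - k * g t) * exp (- k * t))); auto.
    - intro t. auto_derive.
      + exists (dg t). apply Hd.
      + change (fun x0 => g x0) with g. rewrite (is_derive_unique _ _ _ (Hd t)). ring.
    - intros t Ht. apply Rmult_le_pos. specialize (Hs t Ht). lra. apply Rlt_le, exp_pos. }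
  apply (Rmult_le_compat_r (exp (k * y))) in H; [|apply Rlt_le, exp_pos].
  rewrite !Rmult_assoc, <- !exp_plus in H.
  replace (- k * y + k * y) with 0 in H by ring. rewrite exp_0, Rmult_1_r in H.
  replace (- k * x + k * y) with (k * (y - x)) in H by ring. exact H.
Qed.

Lemma L_dn (g dg : R -> R) k x y : x <= y -> (forall t, is_derive g t (dg t)) ->
  (forall t, x <= t <= y -> dg t <= k * g t) -> g y <= g x * exp (k * (y - x)).
Proof.
  intros Hxy Hd Hs.
  assert (H := L_up (fun t => - g t) (fun t => - dg t) k x y Hxy).
  assert (- g x * exp (k * (y - x)) <= - g y); [|lra].
  apply H.
  - intro t. apply is_derive_Reals. apply derivable_pt_lim_opp. apply is_derive_Reals. auto.
  - intros t Ht. specialize (Hs t Ht). lra.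
Qed.

Theorem theorem1p2 (eps delta um up : R) (u : R -> R) :
  0 < eps -> 0 < delta -> up < um ->
  0 < delta * (um - up) / (2 * eps ^ 2) <= 1 / 4 ->
  vd_shock eps delta um up u -> monotone u ->
  u 0 = (um + up) / 2 ->
  let lam_lo := sqrt 2 - 1 in
  let lam_hi := 1 in
  (forall x, x <= 0 ->
     (um - up) / 2 * exp (- (lam_hi * (um - up) * Rabs x) / eps) <= um - u x /\
     um - u x <= (um - up) / 2 * exp (- (lam_lo * (um - up) * Rabs x) / (2 * eps))) /\
  (forall x, 0 <= x ->
     (um - up) / 2 * exp (- (lam_hi * (um - up) * Rabs x) / eps) <= u x - up /\
     u x - up <= (um - up) / 2 * exp (- (lam_lo * (um - up) * Rabs x) / (2 * eps))) /\
  (forall x,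
     lam_lo * (um - up) ^ 2 / (4 * eps) * exp (- (lam_hi * (um - up) * Rabs x) / eps)
       <= - Derive u x /\
     - Derive u x <= lam_hi * (um - up) ^ 2 / (2 * eps) * exp (- (lam_lo * (um - up) * Rabs x) / (2 * eps))).
Proof.
  intros Heps Hdel Hud Hk [Hsm [Hode [Hlm [Hlp [Hd1m Hd1p]]]]] Hmono Hu0 lam_lo lam_hi.
  assert (D0 : forall x, ex_derive u x) by (intro x; exact (Hsm 0%nat x)).
  assert (D1 : forall x, ex_derive (Derive u) x) by (intro x; exact (Hsm 1%nat x)).
  assert (D2 : forall x, ex_derive (Derive (Derive u)) x) by (intro x; exact (Hsm 2%nat x)).
  assert (Ho : forall x, - ((um + up) / 2) * Derive u x + u x * Derive u x
     = eps * Derive (Derive u) x - delta * Derive (Derive (Derive u)) x) by exact Hode.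
  change (is_lim (Derive u) m_infty 0) in Hd1m.
  change (is_lim (Derive u) p_infty 0) in Hd1p.
  clear Hode.
  set (s := (um + up) / 2) in *.
  set (a := (um - up) / 2) in *.
  assert (Ha : 0 < a) by (unfold a; lra).
  assert (Eum : um = s + a) by (unfold s, a; field).
  assert (Eup : up = s - a) by (unfold s, a; field).
  assert (Hda : delta * a <= eps^2 / 4).
  { destruct Hk as [_ Hk]. unfold a.
    apply (Rmult_le_compat_r (2 * eps^2)) in Hk; [|nra].
    unfold Rdiv in Hk. rewrite Rmult_assoc, Rinv_l in Hk; [|nra]. lra. }
  pose (Phi := fun x => eps * Derive u x - delta * Derive (Derive u) x - ((u x)^2/2 - s * u x)).
  assert (HPhi : forall x, is_derive Phi x 0).
  { intro x. unfold Phi. auto_derive.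
    - repeat split; auto.
    - change (fun x0 => Derive (Derive u) x0) with (Derive (Derive u)).
      change (fun x0 => Derive u x0) with (Derive u).
      change (fun x0 => u x0) with u.
      specialize (Ho x). fold s in Ho. lra. }
  pose proof (const_of_d0 Phi HPhi) as HC.
  assert (Hint : forall x, delta * Derive (Derive u) x = eps * Derive u x - Phi 0 - ((u x)^2/2 - s * u x)).
  { intro x. specialize (HC x). unfold Phi at 1 in HC. lra. }
  assert (HL : eps*0 - Phi 0 - (up^2/2 - s*up) = 0).
  { pose proof (G_lim u (Derive u) p_infty up eps (Phi 0) s Hlp Hd1p) as G.
    apply (is_lim_ext _ (fun x => delta * Derive (Derive u) x)) in G; [|intro; rewrite Hint; auto].
    apply (is_lim_scal' _ _ _ (/delta)) in G.
    apply (is_lim_ext _ (Derive (Derive u))) in G; [|intro; field; lra].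
    pose proof (deriv_lim_zero (Derive u) _ D1 Hd1p G) as Z.
    rewrite <- (Rmult_1_l (eps*0 - _ - _)). rewrite <- (Rinv_r delta) by lra. rewrite Rmult_assoc, Z. ring. }
  assert (Hint2 : forall x, delta * Derive (Derive u) x = eps * Derive u x + (a^2 - (u x - s)^2) / 2).
  { intro x. rewrite Hint. rewrite Eup in HL. nra. }
  clear Hint HL HC HPhi Phi Ho.
  assert (Hdec : forall x y, x <= y -> u y <= u x).
  { destruct Hmono as [Hinc|Hdec]; auto. exfalso.
    assert (um <= u 0) by (apply (lim_m_le u um 0 Hlm); intros; apply Hinc; auto).
    assert (u 0 <= up) by (apply (lim_p_ge u up 0 Hlp); intros; apply Hinc; auto).
    lra. }
  assert (Hw : forall x, -a <= u x - s <= a).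
  { intro x.
    assert (up <= u x) by (apply (lim_p_le u up x Hlp); intros; apply Hdec; auto).
    assert (u x <= um) by (apply (lim_m_ge u um x Hlm); intros; apply Hdec; auto).
    lra. }
  assert (Hwl : forall x, x <= 0 -> 0 <= u x - s).
  { intros x Hx. pose proof (Hdec x 0 Hx). lra. }
  assert (Hwr : forall x, 0 <= x -> u x - s <= 0).
  { intros x Hx. pose proof (Hdec 0 x Hx). lra. }
  assert (dF : forall c x, is_derive (fun y => -(eps * Derive u y) - c*(a^2 - (u y - s)^2)) x
            (-(eps * Derive (Derive u) x) + 2*c*(u x - s)*Derive u x)).
  { intros c x. auto_derive.
    - repeat split; auto.
    - change (fun x0 => Derive u x0) with (Derive u).
      change (fun x0 => u x0) with u. ring. }
  assert (limF : forall c, is_lim (fun y => -(eps * Derive u y) - c*(a^2 - (u y - s)^2)) m_infty 0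
                 /\ is_lim (fun y => -(eps * Derive u y) - c*(a^2 - (u y - s)^2)) p_infty 0).
  { intro c. split.
    - replace (Finite 0) with (Finite (-(eps*0) - c*(a^2 - (um - s)^2))) by (f_equal; rewrite Eum; ring).
      apply F_lim; auto.
    - replace (Finite 0) with (Finite (-(eps*0) - c*(a^2 - (up - s)^2))) by (f_equal; rewrite Eup; ring).
      apply F_lim; auto. }
  assert (Fup : forall x, eps * (- Derive u x) <= a^2 - (u x - s)^2).
  { intro y0. destruct (Rle_dec (eps * (- Derive u y0)) (a^2 - (u y0 - s)^2)) as [|Hn]; auto. exfalso.
    destruct (max_arg (fun y => -(eps * Derive u y) - 1*(a^2 - (u y - s)^2))) with (y0 := y0)
      as [M [HM1 HM2]].
    - intro x. eexists. apply dF.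
    - apply limF.
    - apply limF.
    - lra.
    - pose proof (is_derive_unique _ _ _ (dF 1 M)) as HM3.
      assert (HM4 : -(eps * Derive (Derive u) M) + 2*1*(u M - s)*Derive u M = 0) by (rewrite <- HM3; exact HM2).
      clear HM2 HM3. rename HM4 into HM2.
      pose proof (Hint2 M) as E. pose proof (Hw M) as W.
      set (d1 := Derive u M) in *. set (w := u M - s) in *. set (Q := a^2 - w^2) in *.
      set (d2 := Derive (Derive u) M) in *.
      assert (HQ : 0 <= Q) by (unfold Q; nra).
      assert (K1 : (-d1) * (eps^2 - 2*delta*w) = eps * Q / 2).
      { assert (eps * (delta * d2) = delta * (eps * d2)) by ring.
        assert (eps * d2 = - 2 * w * (-d1)) by lra. nra. }
      assert (K2 : eps * (-d1) > Q) by lra.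
      assert (K3 : eps^2/2 <= eps^2 - 2*delta*w) by nra.
      assert (eps * (-d1) * (eps^2 - 2*delta*w) > Q * (eps^2 - 2*delta*w)).
      { apply Rmult_gt_compat_r; nra. }
      nra. }
  assert (Hs2 : sqrt 2 * sqrt 2 = 2) by (apply sqrt_sqrt; lra).
  assert (Hs1 : 1 < sqrt 2).
  { pose proof (sqrt_pos 2). nra. }
  assert (Hlam : lam_lo^2 + 2*lam_lo - 1 = 0) by (unfold lam_lo; nra).
  assert (Hlam0 : 0 < lam_lo < 1) by (unfold lam_lo; nra).
  assert (Flo : forall x, lam_lo * (a^2 - (u x - s)^2) <= eps * (- Derive u x)).
  { intro y0. destruct (Rle_dec (lam_lo * (a^2 - (u y0 - s)^2)) (eps * (- Derive u y0))) as [|Hn]; auto. exfalso.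
    destruct (min_arg (fun y => -(eps * Derive u y) - lam_lo*(a^2 - (u y - s)^2))) with (y0 := y0)
      as [M [HM1 HM2]].
    - intro x. eexists. apply dF.
    - apply limF.
    - apply limF.
    - lra.
    - pose proof (is_derive_unique _ _ _ (dF lam_lo M)) as HM3.
      assert (HM4 : -(eps * Derive (Derive u) M) + 2*lam_lo*(u M - s)*Derive u M = 0) by (rewrite <- HM3; exact HM2).
      clear HM2 HM3. rename HM4 into HM2.
      pose proof (Hint2 M) as E. pose proof (Hw M) as W.
      set (d1 := Derive u M) in *. set (w := u M - s) in *. set (Q := a^2 - w^2) in *.
      set (d2 := Derive (Derive u) M) in *.
      assert (HQ : 0 <= Q) by (unfold Q; nra).
      assert (K1 : (-d1) * (eps^2 - 2*lam_lo*delta*w) = eps * Q / 2).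
      { assert (eps * (delta * d2) = delta * (eps * d2)) by ring.
        assert (eps * d2 = - 2 * lam_lo * w * (-d1)) by lra. nra. }
      assert (K2 : eps * (-d1) < lam_lo * Q) by lra.
      assert (K3 : 0 < eps^2 - 2*lam_lo*delta*w).
      { assert (delta*w <= delta*a) by nra. assert (lam_lo*(delta*w) <= lam_lo*(delta*a)) by nra.
        assert (lam_lo*(delta*a) <= delta*a) by nra. assert (0 < delta * a) by nra. nra. }
      assert (K4 : lam_lo * (eps^2 - 2*lam_lo*delta*w) - eps^2/2 <= 0).
      { assert (delta*(-w) <= delta*a) by nra. assert (0 <= lam_lo^2) by nra.
        assert (A1 : lam_lo^2*(delta*(-w)) <= lam_lo^2*(delta*a)) by (apply Rmult_le_compat_l; lra).
        assert (A2 : lam_lo^2*(delta*a) <= lam_lo^2*(eps^2/4)) by (apply Rmult_le_compat_l; lra).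
        assert (A3 : lam_lo^2*eps^2 = eps^2 - 2*lam_lo*eps^2) by (replace (lam_lo^2) with (1 - 2*lam_lo) by lra; ring).
        lra. }
      assert (eps * (-d1) * (eps^2 - 2*lam_lo*delta*w) < lam_lo * Q * (eps^2 - 2*lam_lo*delta*w)).
      { apply Rmult_lt_compat_r; nra. }
      nra. }
  set (k1 := 2 * a / eps). set (k2 := lam_lo * a / eps).
  assert (Hk1 : eps * k1 = 2 * a) by (unfold k1; field; lra).
  assert (Hk2 : eps * k2 = lam_lo * a) by (unfold k2; field; lra).
  assert (dgm : forall t, is_derive (fun y => um - u y) t (- Derive u t)).
  { intro t. auto_derive; auto. change (fun x0 => u x0) with u. ring. }
  assert (dgp : forall t, is_derive (fun y => u y - up) t (Derive u t)).
  { intro t. auto_derive; auto. change (fun x0 => u x0) with u. ring. }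
  assert (Ba : forall x, x <= 0 -> um - u x <= a * exp (k2 * x)).
  { intros x Hx.
    pose proof (L_up (fun y => um - u y) (fun t => - Derive u t) k2 x 0 Hx dgm) as H.
    simpl in H. rewrite Hu0 in H. replace (um - s) with a in H by (rewrite Eum; ring).
    assert (H' : (um - u x) * exp (k2 * (0 - x)) <= a).
    { apply H. intros t Ht. pose proof (Flo t). pose proof (Hwl t ltac:(lra)). pose proof (Hw t).
      apply (Rmult_le_reg_l eps); auto. rewrite <- Rmult_assoc, Hk2. rewrite Eum.
      assert (0 <= lam_lo * ((a - (u t - s)) * (u t - s))) by (apply Rmult_le_pos; [lra| apply Rmult_le_pos; lra]).
      nra. }
    apply (Rmult_le_compat_r (exp (k2 * x))) in H'; [|apply Rlt_le, exp_pos].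
    rewrite Rmult_assoc, <- exp_plus in H'. replace (k2 * (0 - x) + k2 * x) with 0 in H' by ring.
    rewrite exp_0 in H'. lra. }
  assert (Bb : forall x, x <= 0 -> a * exp (k1 * x) <= um - u x).
  { intros x Hx.
    pose proof (L_dn (fun y => um - u y) (fun t => - Derive u t) k1 x 0 Hx dgm) as H.
    simpl in H. rewrite Hu0 in H. replace (um - s) with a in H by (rewrite Eum; ring).
    assert (H' : a <= (um - u x) * exp (k1 * (0 - x))).
    { apply H. intros t Ht. pose proof (Fup t). pose proof (Hw t).
      apply (Rmult_le_reg_l eps); auto. rewrite <- Rmult_assoc, Hk1. rewrite Eum.
      assert (0 <= (a - (u t - s))^2) by nra. nra. }
    apply (Rmult_le_compat_r (exp (k1 * x))) in H'; [|apply Rlt_le, exp_pos].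
    rewrite Rmult_assoc, <- exp_plus in H'. replace (k1 * (0 - x) + k1 * x) with 0 in H' by ring.
    rewrite exp_0 in H'. lra. }
  assert (Bc : forall x, 0 <= x -> u x - up <= a * exp (- k2 * x)).
  { intros x Hx.
    pose proof (L_dn (fun y => u y - up) (fun t => Derive u t) (- k2) 0 x Hx dgp) as H.
    simpl in H. rewrite Hu0 in H. replace (s - up) with a in H by (rewrite Eup; ring).
    replace (- k2 * x) with (- k2 * (x - 0)) by ring. apply H.
    intros t Ht. pose proof (Flo t). pose proof (Hwr t ltac:(lra)). pose proof (Hw t).
    apply (Rmult_le_reg_l eps); auto. replace (eps * (- k2 * (u t - up))) with (- (eps * k2) * (u t - up)) by ring.
    rewrite Hk2. rewrite Eup.
    assert (0 <= lam_lo * ((a + (u t - s)) * (- (u t - s)))) by (apply Rmult_le_pos; [lra| apply Rmult_le_pos; lra]).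
    nra. }
  assert (Bd : forall x, 0 <= x -> a * exp (- k1 * x) <= u x - up).
  { intros x Hx.
    pose proof (L_up (fun y => u y - up) (fun t => Derive u t) (- k1) 0 x Hx dgp) as H.
    simpl in H. rewrite Hu0 in H. replace (s - up) with a in H by (rewrite Eup; ring).
    replace (- k1 * x) with (- k1 * (x - 0)) by ring. apply H.
    intros t Ht. pose proof (Fup t). pose proof (Hw t).
    apply (Rmult_le_reg_l eps); auto. replace (eps * (- k1 * (u t - up))) with (- (eps * k1) * (u t - up)) by ring.
    rewrite Hk1. rewrite Eup.
    assert (0 <= (a + (u t - s))^2) by nra. nra. }
  assert (E1 : forall x, - (lam_hi * (um - up) * Rabs x) / eps = - k1 * Rabs x).
  { intro x. unfold k1, lam_hi, a. field. lra. }
  assert (E2 : forall x, - (lam_lo * (um - up) * Rabs x) / (2 * eps) = - k2 * Rabs x).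
  { intro x. unfold k2, a. field. lra. }
  assert (E3 : (um - up) ^ 2 = 4 * a^2) by (unfold a; field).
  split; [|split].
  - intros x Hx. rewrite E1, E2, Rabs_left1 by lra.
    replace (- k1 * - x) with (k1 * x) by ring. replace (- k2 * - x) with (k2 * x) by ring.
    split; [apply Bb | apply Ba]; auto.
  - intros x Hx. rewrite E1, E2, Rabs_right by lra.
    split; [apply Bd | apply Bc]; auto.
  - intro x. rewrite E1, E2, E3. unfold lam_hi.
    pose proof (Flo x). pose proof (Fup x). pose proof (Hw x).
    pose proof (exp_pos (- k1 * Rabs x)). pose proof (exp_pos (- k2 * Rabs x)).
    destruct (Rle_dec x 0) as [Hx|Hx].
    + pose proof (Ba x Hx). pose proof (Bb x Hx). pose proof (Hwl x Hx).
      rewrite Rabs_left1 by lra.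
      replace (- k1 * - x) with (k1 * x) by ring. replace (- k2 * - x) with (k2 * x) by ring.
      rewrite Rabs_left1 in * by lra.
      replace (- k1 * - x) with (k1 * x) in * by ring. replace (- k2 * - x) with (k2 * x) in * by ring.
      set (E1x := exp (k1 * x)) in *. set (E2x := exp (k2 * x)) in *.
      set (w := u x - s) in *. set (P := - Derive u x) in *.
      assert (Hum : um - u x = a - w) by (unfold w; rewrite Eum; ring).
      rewrite Hum in *.
      split; apply (Rmult_le_reg_l eps); auto.
      * replace (eps * (lam_lo * (4 * a ^ 2) / (4 * eps) * E1x)) with (lam_lo * (a * (a * E1x))) by (field; lra).
        assert (A1 : a * (a * E1x) <= a * (a - w)) by (apply Rmult_le_compat_l; lra).
        assert (A2 : a * (a - w) <= (a + w) * (a - w)) by (apply Rmult_le_compat_r; lra).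
        assert (A3 : lam_lo * (a * (a * E1x)) <= lam_lo * ((a + w) * (a - w))) by (apply Rmult_le_compat_l; lra).
        nra.
      * replace (eps * (1 * (4 * a ^ 2) / (2 * eps) * E2x)) with (2 * a * (a * E2x)) by (field; lra).
        assert (A1 : 2 * a * (a - w) <= 2 * a * (a * E2x)) by (apply Rmult_le_compat_l; lra).
        assert (A2 : (a + w) * (a - w) <= 2 * a * (a - w)) by (apply Rmult_le_compat_r; lra).
        nra.
    + assert (Hx' : 0 <= x) by lra.
      pose proof (Bc x Hx'). pose proof (Bd x Hx'). pose proof (Hwr x Hx').
      rewrite Rabs_right by lra.
      set (E1x := exp (- k1 * x)) in *. set (E2x := exp (- k2 * x)) in *.
      set (w := u x - s) in *. set (P := - Derive u x) in *.
      assert (Hup : u x - up = a + w) by (unfold w; rewrite Eup; ring).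
      rewrite Hup in *.
      split; apply (Rmult_le_reg_l eps); auto.
      * replace (eps * (lam_lo * (4 * a ^ 2) / (4 * eps) * E1x)) with (lam_lo * (a * (a * E1x))) by (field; lra).
        assert (A1 : a * (a * E1x) <= a * (a + w)) by (apply Rmult_le_compat_l; lra).
        assert (A2 : a * (a + w) <= (a - w) * (a + w)) by (apply Rmult_le_compat_r; lra).
        assert (A3 : lam_lo * (a * (a * E1x)) <= lam_lo * ((a - w) * (a + w))) by (apply Rmult_le_compat_l; lra).
        nra.
      * replace (eps * (1 * (4 * a ^ 2) / (2 * eps) * E2x)) with (2 * a * (a * E2x)) by (field; lra).
        assert (A1 : 2 * a * (a + w) <= 2 * a * (a * E2x)) by (apply Rmult_le_compat_l; lra).
        assert (A2 : (a - w) * (a + w) <= 2 * a * (a + w)) by (apply Rmult_le_compat_r; lra).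
        nra.
Qed.
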